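(* Let $n\ge1$, let $\mathbf u(z)\in\mathbb R^n$ be a column vector function and let $A$ be a constant real skew-symmetric $n\times n$ matrix. Define block matrices of block size $(1,n,1)\times(1,n,1)$ \[ {\cal B}_0=\begin{pmatrix} -1 & 0 & 0\\ 0 & 0 & 0\\ 0 & 0 & 1 \end{pmatrix},\quad {\cal B}_1=\begin{pmatrix} 0 & \mathbf u^T & 0\\ \mathbf u & 0 & \mathbf u\\ 0 & \mathbf u^T & 0 \end{pmatrix},\quad {\cal B}_2=\begin{pmatrix} (\mathbf u,\mathbf u) & -(\mathbf u')^T & 0\\ \mathbf u' & 0 & -\mathbf u'\\ 0 & (\mathbf u')^T & -(\mathbf u,\mathbf u)\end{pmatrix}, \] \[ {\cal B}_3=\begin{pmatrix} 0 & (\mathbf u,\mathbf u)\mathbf u^T & 0\\ (\mathbf u,\mathbf u)\mathbf u & 2\mathbf u'\mathbf u^T-2\mathbf u(\mathbf u')^T & (\mathbf u,\mathbf u)\mathbf u\\ 0 & (\mathbf u,\mathbf u)\mathbf u^T & 0 \end{pmatrix},\quad {\cal A}_0=\begin{pmatrix} 0&0&0\\ 0&A&0\\ 0&0&0 \end{pmatrix}, \] and \[ {\cal A}=-\zeta(\zeta{\cal B}_0+{\cal B}_1)+z{\cal B}_0-{\cal B}_2-\zeta^{-1}({\cal B}''_1-z{\cal B}_1-{\cal B}_3-{\cal A}_0),\qquad {\cal B}=\zeta{\cal B}_0+{\cal B}_1. \] Then the equation \[ \mathbf u'''= 3(\mathbf u,\mathbf u)\mathbf u'+z\mathbf u'+\mathbf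 u+A\mathbf u \] admits the isomonodromic Lax representation ${\cal A}'={\cal B}_\zeta+[{\cal B},{\cal A}]$.
   Context: Primes denote derivatives with respect to $z$; $\zeta$ is a spectral parameter independent of $z$; $(\cdot,\cdot)$ is the standard scalar product. ''Admits the Lax representation'' means the matrix equation holds identically in $\zeta$ by virtue of the equation. *)

(* Defs.v *)
From HB Require Import structures.
From mathcomp Require Import all_boot all_order all_algebra.
From mathcomp Require Import all_classical all_reals all_analysis.
Set Implicit Arguments. Unset Strict Implicit. Unset Printing Implicit Defensive.
Import Order.TTheory GRing.Theory Num.Theory.
Local Open Scope ring_scope.

Section Defs.
Variable R : realType.

Definition dotc n (v w : 'cV[R]_n) : R := (v^T *m w) 0 0.

Definition mxder p q (F : R -> 'M[R]_(p, q)) : R -> 'M[R]_(p, q) :=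
  fun z => \matrix_(i, j) derive1 (fun t => F t i j) z.

Definition mxderivable p q (F : R -> 'M[R]_(p, q)) (z : R) : Prop :=
  forall i j, derivable (fun t => F t i j) z 1.

Definition mx3 n (a11 : 'M[R]_1) (a12 : 'M[R]_(1, n)) (a13 : 'M[R]_1)
  (a21 : 'M[R]_(n, 1)) (a22 : 'M[R]_n) (a23 : 'M[R]_(n, 1))
  (a31 : 'M[R]_1) (a32 : 'M[R]_(1, n)) (a33 : 'M[R]_1) : 'M[R]_(1 + n + 1) :=
  block_mx (block_mx a11 a12 a21 a22) (col_mx a13 a23) (row_mx a31 a32) a33.

Variable n : nat.

Definition B0 : 'M[R]_(1 + n + 1) :=
  mx3 (-1)%:M 0 0 0 0 0 0 0 1%:M.

Definition B1 (u : R -> 'cV[R]_n) (z : R) : 'M[R]_(1 + n + 1) :=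
  mx3 0 (u z)^T 0 (u z) 0 (u z) 0 (u z)^T 0.

Definition B2 (u : R -> 'cV[R]_n) (z : R) : 'M[R]_(1 + n + 1) :=
  let v := u z in let w := mxder u z in let s := dotc v v in
  mx3 s%:M (- w^T) 0 w 0 (- w) 0 w^T (- s)%:M.

Definition B3 (u : R -> 'cV[R]_n) (z : R) : 'M[R]_(1 + n + 1) :=
  let v := u z in let w := mxder u z in let s := dotc v v in
  mx3 0 (s *: v^T) 0 (s *: v) (2%:R *: (w *m v^T) - 2%:R *: (v *m w^T))
      (s *: v) 0 (s *: v^T) 0.

Definition A0 (A : 'M[R]_n) : 'M[R]_(1 + n + 1) :=
  mx3 0 0 0 0 A 0 0 0 0.

Definition BB (u : R -> 'cV[R]_n) (zeta z : R) : 'M[R]_(1 + n + 1) :=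
  zeta *: B0 + B1 u z.

Definition AA (u : R -> 'cV[R]_n) (A : 'M[R]_n) (zeta z : R) : 'M[R]_(1 + n + 1) :=
  - (zeta *: (zeta *: B0 + B1 u z)) + z *: B0 - B2 u z
  - zeta^-1 *: (mxder (mxder (B1 u)) z - z *: B1 u z - B3 u z - A0 A).

End Defs.

(* Main.v *)
Require Import Defs.
From HB Require Import structures.
From mathcomp Require Import all_boot all_order all_algebra.
From mathcomp Require Import all_classical all_reals all_analysis.
From mathcomp Require Import ring.
Import Order.TTheory GRing.Theory Num.Theory.
Set Implicit Arguments. Unset Strict Implicit.
Local Open Scope ring_scope.


Definition HD (R : realType) p q (F : R -> 'M[R]_(p,q)) (z : R) (D : 'M[R]_(p,q)) :=
  forall i j, is_derive z (1:R) (fun t => F t i j) (D i j).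

Arguments HD {R p q}.
Lemma HD_mxder (R : realType) p q (F : R -> 'M[R]_(p,q)) z D :
  HD F z D -> mxderivable F z /\ mxder F z = D.
Proof.
move=> H; split; first by move=> i j; case: (H i j).
by apply/matrixP => i j; rewrite mxE derive1E; case: (H i j) => _ ->.
Qed.

Lemma HD_of (R : realType) p q (F : R -> 'M[R]_(p,q)) z :
  mxderivable F z -> HD F z (mxder F z).
Proof. by move=> H i j; rewrite mxE derive1E; apply: derivableP. Qed.

Lemma HD_ext (R : realType) p q (F G : R -> 'M[R]_(p,q)) z D :
  (forall t, F t = G t) -> HD F z D -> HD G z D.
Proof. by move=> e; have -> : F = G by apply/funext. Qed.

Lemma HD_cst (R : realType) p q (C : 'M[R]_(p,q)) z : HD (fun _ => C) z 0.
Proof. by move=> i j; rewrite mxE; apply: is_derive_cst. Qed.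

Lemma HD_add (R : realType) p q (F G : R -> 'M[R]_(p,q)) z DF DG :
  HD F z DF -> HD G z DG -> HD (fun t => F t + G t) z (DF + DG).
Proof.
move=> HF HG i j; rewrite mxE.
have -> : (fun t => (F t + G t) i j) = (fun t => F t i j) + (fun t => G t i j).
  by apply/funext => t; rewrite !mxE.
exact: is_deriveD.
Qed.

Lemma HD_opp (R : realType) p q (F : R -> 'M[R]_(p,q)) z DF :
  HD F z DF -> HD (fun t => - F t) z (- DF).
Proof.
move=> HF i j; rewrite mxE.
have -> : (fun t => (- F t) i j) = - (fun t => F t i j).
  by apply/funext => t; rewrite !mxE.
exact: is_deriveN.
Qed.

Lemma HD_sub (R : realType) p q (F G : R -> 'M[R]_(p,q)) z DF DG :
  HD F z DF -> HD G z DG -> HD (fun t => F t - G t) z (DF - DG).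
Proof. by move=> HF HG; apply: HD_add => //; apply: HD_opp. Qed.

Lemma HD_scale (R : realType) p q (f : R -> R) (F : R -> 'M[R]_(p,q)) (z df : R) DF :
  is_derive z 1 f df -> HD F z DF ->
  HD (fun t => f t *: F t) z (f z *: DF + df *: F z).
Proof.
move=> Hf HF i j; rewrite !mxE.
have -> : (fun t => (f t *: F t) i j) = f * (fun t => F t i j).
  by apply/funext => t; rewrite !mxE.
apply: is_derive_eq (is_deriveM Hf (HF i j)) _.
change (f z * DF i j + F z i j * df = f z * DF i j + df * F z i j).
by rewrite [F z i j * df]mulrC.
Qed.

Lemma HD_eq (R : realType) p q (F : R -> 'M[R]_(p,q)) z D D' :
  HD F z D -> D = D' -> HD F z D'.
Proof. by move=> H <-. Qed.

Lemma HD_scalec (R : realType) p q (c : R) (F : R -> 'M[R]_(p,q)) z DF :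
  HD F z DF -> HD (fun t => c *: F t) z (c *: DF).
Proof.
move=> HF; have := HD_scale (is_derive_cst c z 1) HF.
by rewrite scale0r addr0.
Qed.

Lemma HD_mul (R : realType) p q r (F : R -> 'M[R]_(p,q)) (G : R -> 'M[R]_(q,r)) z DF DG :
  HD F z DF -> HD G z DG -> HD (fun t => F t *m G t) z (F z *m DG + DF *m G z).
Proof.
move=> HF HG i j.
have -> : (fun t => (F t *m G t) i j) = \sum_(k < q) (fun t => F t i k * G t k j).
  by rewrite fct_sumE; apply/funext => t; rewrite mxE.
rewrite !mxE -big_split /=.
apply: is_derive_sum => k.
apply: is_derive_eq (is_deriveM (HF i k) (HG k j)) _.
change (F z i k * DG k j + G z k j * DF i k = F z i k * DG k j + DF i k * G z k j).
by rewrite [G z k j * _]mulrC.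
Qed.

Lemma HD_tr (R : realType) p q (F : R -> 'M[R]_(p,q)) z DF :
  HD F z DF -> HD (fun t => (F t)^T) z DF^T.
Proof.
move=> HF i j; rewrite mxE.
have -> : (fun t => (F t)^T i j) = (fun t => F t j i) by apply/funext => t; rewrite mxE.
exact: HF.
Qed.

Lemma HD_scalar (R : realType) p (f : R -> R) (z df : R) :
  is_derive z 1 f df -> HD (fun t => (f t)%:M : 'M[R]_p) z df%:M.
Proof.
move=> Hf i j; rewrite mxE.
have -> : (fun t => ((f t)%:M : 'M[R]_p) i j) = (i == j)%:R \*: f.
  by apply/funext => t; rewrite mxE /= -[RHS]/((i==j)%:R * f t) mulr_natl.
by apply: is_derive_eq (is_deriveZ _ Hf) _; rewrite -[LHS]/((i==j)%:R * df) mulr_natl.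
Qed.

Lemma HD_col (R : realType) p1 p2 q (F : R -> 'M[R]_(p1,q)) (G : R -> 'M[R]_(p2,q)) z DF DG :
  HD F z DF -> HD G z DG -> HD (fun t => col_mx (F t) (G t)) z (col_mx DF DG).
Proof.
move=> HF HG i j; rewrite -[i]splitK; case: (fintype.split i) => k /=.
  rewrite col_mxEu.
  have -> : (fun t => col_mx (F t) (G t) (lshift p2 k) j) = (fun t => F t k j).
    by apply/funext => t; rewrite col_mxEu.
  exact: HF.
rewrite col_mxEd.
have -> : (fun t => col_mx (F t) (G t) (rshift p1 k) j) = (fun t => G t k j).
  by apply/funext => t; rewrite col_mxEd.
exact: HG.
Qed.

Lemma HD_row (R : realType) p q1 q2 (F : R -> 'M[R]_(p,q1)) (G : R -> 'M[R]_(p,q2)) z DF DG :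
  HD F z DF -> HD G z DG -> HD (fun t => row_mx (F t) (G t)) z (row_mx DF DG).
Proof.
move=> HF HG i j; rewrite -[j]splitK; case: (fintype.split j) => k /=.
  rewrite row_mxEl.
  have -> : (fun t => row_mx (F t) (G t) i (lshift q2 k)) = (fun t => F t i k).
    by apply/funext => t; rewrite row_mxEl.
  exact: HF.
rewrite row_mxEr.
have -> : (fun t => row_mx (F t) (G t) i (rshift q1 k)) = (fun t => G t i k).
  by apply/funext => t; rewrite row_mxEr.
exact: HG.
Qed.

Lemma HD_block (R : realType) p1 p2 q1 q2 (F1 : R -> 'M[R]_(p1,q1)) (F2 : R -> 'M[R]_(p1,q2))
  (F3 : R -> 'M[R]_(p2,q1)) (F4 : R -> 'M[R]_(p2,q2)) z D1 D2 D3 D4 :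
  HD F1 z D1 -> HD F2 z D2 -> HD F3 z D3 -> HD F4 z D4 ->
  HD (fun t => block_mx (F1 t) (F2 t) (F3 t) (F4 t)) z (block_mx D1 D2 D3 D4).
Proof.
move=> H1 H2 H3 H4; rewrite /block_mx.
by apply: HD_col; apply: HD_row.
Qed.

Lemma HD_mx3 (R : realType) n (F1 : R -> 'M[R]_1) (F2 : R -> 'M[R]_(1,n)) (F3 : R -> 'M[R]_1)
  (F4 : R -> 'M[R]_(n,1)) (F5 : R -> 'M[R]_n) (F6 : R -> 'M[R]_(n,1))
  (F7 : R -> 'M[R]_1) (F8 : R -> 'M[R]_(1,n)) (F9 : R -> 'M[R]_1) z D1 D2 D3 D4 D5 D6 D7 D8 D9 :
  HD F1 z D1 -> HD F2 z D2 -> HD F3 z D3 -> HD F4 z D4 -> HD F5 z D5 ->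
  HD F6 z D6 -> HD F7 z D7 -> HD F8 z D8 -> HD F9 z D9 ->
  HD (fun t => mx3 (F1 t) (F2 t) (F3 t) (F4 t) (F5 t) (F6 t) (F7 t) (F8 t) (F9 t)) z
     (mx3 D1 D2 D3 D4 D5 D6 D7 D8 D9).
Proof.
move=> *; rewrite /mx3; apply: HD_block; [apply: HD_block|apply: HD_col|apply: HD_row|] => //.
Qed.


Lemma mx3_add (R : realType) n a11 a12 a13 a21 a22 a23 a31 a32 a33
  b11 b12 b13 b21 b22 b23 b31 b32 b33 :
  @mx3 R n a11 a12 a13 a21 a22 a23 a31 a32 a33 + mx3 b11 b12 b13 b21 b22 b23 b31 b32 b33
  = mx3 (a11 + b11) (a12 + b12) (a13 + b13) (a21 + b21) (a22 + b22) (a23 + b23)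
        (a31 + b31) (a32 + b32) (a33 + b33).
Proof. by rewrite /mx3 !add_block_mx add_col_mx add_row_mx. Qed.

Lemma mx3_opp (R : realType) n a11 a12 a13 a21 a22 a23 a31 a32 a33 :
  - @mx3 R n a11 a12 a13 a21 a22 a23 a31 a32 a33
  = mx3 (- a11) (- a12) (- a13) (- a21) (- a22) (- a23) (- a31) (- a32) (- a33).
Proof. by rewrite /mx3 !opp_block_mx opp_col_mx opp_row_mx. Qed.

Lemma mx3_sub (R : realType) n a11 a12 a13 a21 a22 a23 a31 a32 a33
  b11 b12 b13 b21 b22 b23 b31 b32 b33 :
  @mx3 R n a11 a12 a13 a21 a22 a23 a31 a32 a33 - mx3 b11 b12 b13 b21 b22 b23 b31 b32 b33
  = mx3 (a11 - b11) (a12 - b12) (a13 - b13) (a21 - b21) (a22 - b22) (a23 - b23)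
        (a31 - b31) (a32 - b32) (a33 - b33).
Proof. by rewrite mx3_opp mx3_add. Qed.

Lemma mx3_scale (R : realType) n (c : R) a11 a12 a13 a21 a22 a23 a31 a32 a33 :
  c *: @mx3 R n a11 a12 a13 a21 a22 a23 a31 a32 a33
  = mx3 (c *: a11) (c *: a12) (c *: a13) (c *: a21) (c *: a22) (c *: a23)
        (c *: a31) (c *: a32) (c *: a33).
Proof. by rewrite /mx3 !scale_block_mx scale_col_mx scale_row_mx. Qed.

Lemma mx3_mul (R : realType) n a11 a12 a13 a21 a22 a23 a31 a32 a33
  b11 b12 b13 b21 b22 b23 b31 b32 b33 :
  @mx3 R n a11 a12 a13 a21 a22 a23 a31 a32 a33 *m mx3 b11 b12 b13 b21 b22 b23 b31 b32 b33
  = mx3 (a11 *m b11 + a12 *m b21 + a13 *m b31)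
        (a11 *m b12 + a12 *m b22 + a13 *m b32)
        (a11 *m b13 + a12 *m b23 + a13 *m b33)
        (a21 *m b11 + a22 *m b21 + a23 *m b31)
        (a21 *m b12 + a22 *m b22 + a23 *m b32)
        (a21 *m b13 + a22 *m b23 + a23 *m b33)
        (a31 *m b11 + a32 *m b21 + a33 *m b31)
        (a31 *m b12 + a32 *m b22 + a33 *m b32)
        (a31 *m b13 + a32 *m b23 + a33 *m b33).
Proof.
rewrite /mx3 !mulmx_block mul_col_row mul_block_col mul_col_mx mul_row_block mul_mx_row mul_row_col.
by rewrite !add_block_mx add_col_mx add_row_mx.
Qed.


Lemma dotcC (R : realType) n (a b : 'cV[R]_n) : dotc a b = dotc b a.
Proof. by rewrite /dotc -[a^T *m b]trmxK trmx_mul trmxK mxE. Qed.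

Lemma addE (R : realType) p q (A B : 'M[R]_(p,q)) i j : (A + B) i j = A i j + B i j.
Proof. by rewrite mxE. Qed.
Lemma oppE (R : realType) p q (A : 'M[R]_(p,q)) i j : (- A) i j = - A i j.
Proof. by rewrite mxE. Qed.
Lemma scaleE (R : realType) p q (c : R) (A : 'M[R]_(p,q)) i j : (c *: A) i j = c * A i j.
Proof. by rewrite mxE. Qed.
Lemma scalarE (R : realType) p (c : R) i j : (c%:M : 'M[R]_p) i j = c *+ (i == j).
Proof. by rewrite mxE. Qed.
Lemma zeroE (R : realType) p q i j : (0 : 'M[R]_(p,q)) i j = 0.
Proof. by rewrite mxE. Qed.

Lemma isdN (R : realType) (f : R -> R) (z df : R) :
  is_derive z 1 f df -> is_derive z 1 (fun t => - f t) (- df).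
Proof. by move=> H; apply: is_deriveN. Qed.

Lemma is_dotc (R : realType) n (u : R -> 'cV[R]_n) (z : R) w :
  HD u z w -> is_derive z 1 (fun t => dotc (u t) (u t)) (2%:R * dotc (u z) w).
Proof.
move=> H; have := HD_mul (HD_tr H) H 0 0.
move=> H'; apply: is_derive_eq H' _.
by rewrite addE -/(dotc (u z) w) -/(dotc w (u z)) [dotc w _]dotcC mulr2n mulrDl mul1r.
Qed.

Lemma HD_B1 (R : realType) n (u : R -> 'cV[R]_n) (z : R) w :
  HD u z w -> HD (B1 u) z (B1 (fun _ => w) z).
Proof.
move=> H; rewrite /B1.
by apply: HD_mx3; try apply: HD_cst; try apply: HD_tr; exact: H.
Qed.

Lemma rowcol (R : realType) n (a b : 'cV[R]_n) : a^T *m b = (dotc a b)%:M.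
Proof. by apply/matrixP=> i j; rewrite [i]ord1 [j]ord1 scalarE eqxx mulr1n. Qed.

Lemma outer_col (R : realType) n (a b c : 'cV[R]_n) : a *m b^T *m c = dotc b c *: a.
Proof. by rewrite -mulmxA rowcol mul_mx_scalar. Qed.

Lemma ord1_eq (i j : 'I_1) : (i == j) = true.
Proof. by rewrite [i]ord1 [j]ord1. Qed.

Lemma trD (R : realType) p q (A B : 'M[R]_(p,q)) : (A + B)^T = A^T + B^T.
Proof. exact: linearD. Qed.
Lemma trN (R : realType) p q (A : 'M[R]_(p,q)) : (- A)^T = - A^T.
Proof. exact: linearN. Qed.
Lemma trZ (R : realType) p q c (A : 'M[R]_(p,q)) : (c *: A)^T = c *: A^T.
Proof. exact: linearZ. Qed.

Lemma sAl (R : realType) m p q (a : R) (A : 'M[R]_(m,p)) (B : 'M[R]_(p,q)) :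
  (a *: A) *m B = a *: (A *m B).
Proof. by rewrite scalemxAl. Qed.
Lemma sAr (R : realType) m p q (a : R) (A : 'M[R]_(m,p)) (B : 'M[R]_(p,q)) :
  A *m (a *: B) = a *: (A *m B).
Proof. by rewrite scalemxAr. Qed.


Theorem mainTheorem12 (R : realType) (n : nat) (hn : (1 <= n)%N)
  (A : 'M[R]_n) (u : R -> 'cV[R]_n) :
  A^T = - A ->
  (forall z, mxderivable u z /\ mxderivable (mxder u) z
             /\ mxderivable (mxder (mxder u)) z) ->
  (forall z, mxder (mxder (mxder u)) z =
      (3%:R * dotc (u z) (u z)) *: mxder u z + z *: mxder u z + u z + A *m u z) ->
  forall zeta z : R, zeta != 0 ->
    mxderivable (fun t => AA u A zeta t) z /\
    mxder (fun t => AA u A zeta t) z =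
      mxder (fun x => BB u x z) zeta
      + (BB u zeta z *m AA u A zeta z - AA u A zeta z *m BB u zeta z).
Proof.
move=> hAT hder hu3 zeta z hz.
have Hu t : HD u t (mxder u t) := HD_of (hder t).1.
have Hu1 t : HD (mxder u) t (mxder (mxder u) t) := HD_of (hder t).2.1.
have Hu2 t : HD (mxder (mxder u)) t (mxder (mxder (mxder u)) t) := HD_of (hder t).2.2.
have e1 : mxder (B1 u) = B1 (mxder u).
  by apply/funext => t; case: (HD_mxder (HD_B1 (Hu t))) => _ ->.
have e2 : mxder (mxder (B1 u)) = B1 (mxder (mxder u)).
  by rewrite e1; apply/funext => t; case: (HD_mxder (HD_B1 (Hu1 t))) => _ ->.
have HBB : mxder (fun x => BB u x z) zeta = B0 R n.
  have := HD_add (HD_scale (is_derive_id zeta 1) (HD_cst (B0 R n) zeta)) (HD_cst (B1 u z) zeta).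
  by case/HD_mxder => _ ->; rewrite scaler0 add0r addr0 scale1r.
suff H : HD (fun t => AA u A zeta t) z
   (B0 R n + (BB u zeta z *m AA u A zeta z - AA u A zeta z *m BB u zeta z)).
  by case: (HD_mxder H) => H1 H2; split => //; rewrite H2 HBB.
eapply HD_eq.
  rewrite /AA e2 /B2 /B3 /B1 /A0 /=.
  repeat first [ apply: HD_cst | apply: HD_add | apply: HD_sub | apply: HD_opp
    | apply: HD_scalec | apply: HD_scale | apply: HD_mul | apply: HD_tr | apply: HD_mx3
    | apply: HD_scalar | apply: isdN | apply: is_dotc | apply: Hu | apply: Hu1 | apply: Hu2
    | apply: is_derive_id ].
have es : ((u z)^T *m mxder u z + (mxder u z)^T *m u z) 0 0 = 2%:R * dotc (u z) (mxder u z).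
  by rewrite addE -/(dotc (u z) (mxder u z)) -/(dotc (mxder u z) (u z)) [dotc (mxder u z) _]dotcC mulr2n mulrDl mul1r.
rewrite /= es hu3 /BB /AA e2 /B0 /B1 /B2 /B3 /A0 /=.
rewrite !(add0r, addr0, scaler0, scale1r).
rewrite !(mx3_mul, mx3_scale, mx3_opp, mx3_add).
congr mx3.
all: move: (u z) (mxder u z) (mxder (mxder u) z) => v w x.
all: rewrite ?(trD, trN, trZ, trmx_mul, trmxK, hAT, trmx0).
all: rewrite ?(scaler0, scale0r, addr0, add0r, oppr0, subr0, sub0r).
all: do 3 rewrite ?(mulmxDl, mulmxDr, mulmxN, mulNmx, mul0mx, mulmx0, sAl, sAr).
all: rewrite ?mulmxA ?(outer_col, rowcol, mul_scalar_mx, mul_mx_scalar).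
all: rewrite ?[dotc w v]dotcC ?[dotc x v]dotcC ?[dotc x w]dotcC.
all: apply/matrixP => i j; rewrite ?(addE, oppE, scaleE, scalarE, zeroE, ord1_eq, mulr1n).
all: by field.
Qed.
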